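(* For every colouring $\psi$, there is a unique homomorphism of $\mathfrak a$-algebras $U_h(\psi)/hU_h(\psi)\to U(\mathfrak{sl}_2)$, and it is surjective.
   Context: $\mathbb k$ is a field of characteristic zero, and $\mathbb k[[h]]$ is the ring of formal power series over $\mathbb k$. For a $\mathbb k$-vector space $V_0$, $V_0[[h]]$ denotes the module of formal series $\sum_{m\ge0}v_mh^m$ with $v_m\in V_0$. $\mathfrak a$ is the Lie algebra over $\mathbb k$ generated by $H,X^-,X^+$ subject to $[H,X^\pm]=\pm2X^\pm$. An $\mathfrak a$-algebra is a $U(\mathfrak a)$-algebra, i.e. an algebra $A$ together with a structural homomorphism $U(\mathfrak a)\to A$; homomorphisms of $\mathfrak a$-algebras commute with the structural maps. $U(\mathfrak{sl}_2)$ is an $\mathfrak a$-algebra via the canonical projection, which sends $H,X^\pm$ to the Chevalley generators; these satisfy in addition $[X^+,X^-]=H$. We set $U_h(\mathfrak a):=U(\mathfrak a)[[h]]$. Any $U_h(\mathfrak a)$-algebra $A$ makes $A/hA$ an $\mathfrak a$-algebra, via $U_h(\mathfrak a)/hU_h(\mathfrak a)\cong U(\mathfrak a)$. A colouring is a sequence $\psi=(\psi^k)_{k\ge1}$ of functions $\psi^k:\mathbb Z\to\mathbb k[[h]]$ satisfying: - (C1) $\psi^k(n)\equiv k(n-k+1)\bmod h$; - (C2) $\psi^{n+1}(n)=0$ for all $n\ge0$; - (C3) $\psi^{n+k+1}(n)=\psi^k(-n-2)$ for all $k\ge1$ and all $n\ge0$. $V_h(n,\psi)$ is the representation of $U_h(\mathfrak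 a)$ on $(\bigoplus_{k\ge0}\mathbb k b_k)[[h]]$ with the following action: - $H.b_k=(n-2k)b_k$; - $X^-.b_k=b_{k+1}$; - $X^+.b_0=0$, and $X^+.b_k=\psi^k(n)b_{k-1}$ for $k\ge1$. $U_h(\psi)$ is the quotient of $U_h(\mathfrak a)$ by the two-sided ideal of elements that act by zero on $V_h(n,\psi)$ for every $n\in\mathbb Z$. It is a $U_h(\mathfrak a)$-algebra via the projection map. *)

(* Defs.v *)
From HB Require Import structures.
From mathcomp Require Import all_boot all_order all_algebra.
Set Implicit Arguments. Unset Strict Implicit. Unset Printing Implicit Defensive.
Import GRing.Theory.
Local Open Scope ring_scope.

Section Defs.
Variable k : fieldType.

Definition alg_hom (A B : algType k) (f : A -> B) : Prop :=
  [/\ (forall x y, f (x + y) = f x + f y),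
      (forall (c : k) x, f (c *: x) = c *: f x),
      (forall x y, f (x * y) = f x * f y) &
      f 1 = 1].

(* Defining relations of the Lie algebra a = <H, X^-, X^+ | [H,X^+-] = +-2X^+->,
   read inside an associative algebra (commutators are ring commutators). *)
Definition a_rels (B : algType k) (H Xm Xp : B) : Prop :=
  H * Xp - Xp * H = Xp *+ 2 /\ H * Xm - Xm * H = - (Xm *+ 2).

Definition sl2_rels (B : algType k) (H Xm Xp : B) : Prop :=
  a_rels H Xm Xp /\ Xp * Xm - Xm * Xp = H.

(* (A, H, Xm, Xp) is the universal enveloping algebra of the Lie algebra
   presented by the relations [rels]: the relations hold in A, and for every
   k-algebra B with elements satisfying the relations there is exactly one
   k-algebra homomorphism A -> B sending generators to those elements. *)
Definition is_enveloping
  (rels : forall B : algType k, B -> B -> B -> Prop)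
  (A : algType k) (H Xm Xp : A) : Prop :=
  rels A H Xm Xp /\
  forall (B : algType k) (H' Xm' Xp' : B), rels B H' Xm' Xp' ->
    (exists f : A -> B, [/\ alg_hom f, f H = H', f Xm = Xm' & f Xp = Xp'])
    /\ (forall f g : A -> B,
          alg_hom f -> f H = H' -> f Xm = Xm' -> f Xp = Xp' ->
          alg_hom g -> g H = H' -> g Xm = Xm' -> g Xp = Xp' ->
          forall x, f x = g x).

Definition is_Ua := is_enveloping a_rels.
Definition is_Usl2 := is_enveloping sl2_rels.

(* V0[[h]] : the series sum_m v_m h^m is the coefficient function m |-> v_m. *)
Definition pseries (T : Type) := nat -> T.

Definition ps_mul (R : pzRingType) (f g : pseries R) : pseries R :=
  fun m => \sum_(i < m.+1) f i * g (m - i)%N.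

(* psi k n = psi^k(n) in k[[h]]; only indices k >= 1 are meaningful
   (psi 0 is never used). *)
Definition colouring (psi : nat -> int -> pseries k) : Prop :=
  [/\ (forall (j : nat) (n : int), (0 < j)%N ->
                 psi j n 0%N = ((j%:Z) * (n - j%:Z + 1))%:~R),
      (forall (n : nat) (m : nat), psi n.+1 n%:Z m = 0) &
      (forall (j n : nat), (0 < j)%N ->
                 psi (n + j).+1 n%:Z = psi j (- n%:Z - 2))].

(* Ambient space (prod_i k b_i)[[h]]: v j i = coefficient of h^j b_i. *)
Definition Vamb := nat -> nat -> k.

(* V_h(n,psi) = (oplus_i k b_i)[[h]]: each h-coefficient is a finite
   combination of the b_i. *)
Definition in_Vh (v : Vamb) : Prop :=
  forall j : nat, exists N : nat, forall i : nat, (N <= i)%N -> v j i = 0.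

Definition actH (n : int) (v : Vamb) : Vamb :=
  fun j i => (n - (i%:Z *+ 2))%:~R * v j i.
Definition actXm (v : Vamb) : Vamb :=
  fun j i => if i is i'.+1 then v j i' else 0.
Definition actXp (psi : nat -> int -> pseries k) (n : int) (v : Vamb) : Vamb :=
  fun j i => \sum_(a < j.+1) psi i.+1 n a * v (j - a)%N i.+1.

(* r : Ua -> (Vamb -> Vamb) is the action of U(a) on V_h(n,psi) (extended
   to the ambient space by the same formulas): a unital algebra action
   whose generators act by the formulas above. *)
Definition is_Vh_action (Ua : algType k) (H Xm Xp : Ua)
  (psi : nat -> int -> pseries k) (n : int) (r : Ua -> Vamb -> Vamb) : Prop :=
  [/\ (forall x y v j i, r (x + y) v j i = r x v j i + r y v j i),
      (forall (c : k) x v j i, r (c *: x) v j i = c * r x v j i),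
      (forall x y v, r (x * y) v = r x (r y v)),
      (forall v, r 1 v = v) &
      [/\ (forall v, r H v = actH n v),
          (forall v, r Xm v = actXm v) &
          (forall v, r Xp v = actXp psi n v)]].

Section Uh.
Variable Ua : algType k.
Definition Uh := pseries Ua.

Definition uh_add (X Y : Uh) : Uh := fun m => X m + Y m.
Definition uh_scale (c : k) (X : Uh) : Uh := fun m => c *: X m.
Definition uh_mul (X Y : Uh) : Uh := ps_mul X Y.
Definition uh_one : Uh := fun m => if m is 0%N then 1 else 0.
Definition uh_const (x : Ua) : Uh := fun m => if m is 0%N then x else 0.
Definition uh_h (X : Uh) : Uh := fun m => if m is m'.+1 then X m' else 0.

Definition uh_act (r : Ua -> Vamb -> Vamb) (X : Uh) (v : Vamb) : Vamb :=
  fun j i => \sum_(m < j.+1) r (X m) v (j - m)%N i.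

(* The kernel of U_h(a) -> U_h(psi): elements acting by zero on every
   V_h(n,psi), n in Z. *)
Definition in_Ipsi (rho : int -> Ua -> Vamb -> Vamb) (X : Uh) : Prop :=
  forall (n : int) (v : Vamb), in_Vh v -> forall j i, uh_act (rho n) X v j i = 0.

(* The kernel of U_h(a) -> U_h(psi)/h U_h(psi): I_psi + h U_h(a). *)
Definition in_J (rho : int -> Ua -> Vamb -> Vamb) (X : Uh) : Prop :=
  exists Y Z : Uh, in_Ipsi rho Y /\ forall m, X m = Y m + uh_h Z m.

Definition uh_alg_hom (B : algType k) (f : Uh -> B) : Prop :=
  [/\ (forall X Y, f (uh_add X Y) = f X + f Y),
      (forall (c : k) X, f (uh_scale c X) = c *: f X),
      (forall X Y, f (uh_mul X Y) = f X * f Y) &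
      f uh_one = 1].

(* Homomorphisms of a-algebras U_h(psi)/h U_h(psi) -> B, where B has
   structural map s : U(a) -> B, are represented (universal property of
   the quotient) by the k-algebra homomorphisms f : U_h(a) -> B vanishing
   on the kernel I_psi + h U_h(a); the structural map of the quotient is
   U(a) ~= U_h(a)/h U_h(a) -> U_h(psi)/h U_h(psi), x |-> class of x, so
   compatibility with structural maps reads f (uh_const x) = s x. *)
Definition quot_a_hom (rho : int -> Ua -> Vamb -> Vamb)
  (B : algType k) (s : Ua -> B) (f : Uh -> B) : Prop :=
  [/\ uh_alg_hom f,
      (forall X, in_J rho X -> f X = 0) &
      (forall x, f (uh_const x) = s x)].
End Uh.

End Defs.

(* Main.v *)
Require Import Defs.
From HB Require Import structures.
From mathcomp Require Import all_boot all_order all_algebra.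
From mathcomp Require Import boolp ring zify.
Import GRing.Theory.
Local Open Scope ring_scope.

Section Gen.
Variables (k : fieldType) (A : algType k) (P : A -> Prop).
Hypothesis P1 : P 1.
Hypothesis PD : forall x y, P x -> P y -> P (x + y).
Hypothesis PZ : forall (c : k) x, P x -> P (c *: x).
Hypothesis PM : forall x y, P x -> P y -> P (x * y).

Definition Pb : pred A := fun x => `[< P x >].
Lemma Pb_closed : GRing.subsemialg_closed Pb.
Proof.
have P0 : P 0 by rewrite -(scale0r (1:A)); apply PZ.
split.
- by apply/asboolP.
- split; first by apply/asboolP.
  by move=> u v /asboolP Hu /asboolP Hv; apply/asboolP; apply PD.
- by move=> c u /asboolP Hu; apply/asboolP; apply PZ.
- by move=> u v /asboolP Hu /asboolP Hv; apply/asboolP; apply PM.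
Qed.
Record SubA : Type := MkSub { sval_ :> A ; _ : Pb sval_ }.
HB.instance Definition _ := [isSub for sval_].
HB.instance Definition _ := [Choice of SubA by <:].
HB.instance Definition _ := GRing.isSubalgClosed.Build k A Pb Pb_closed.
HB.instance Definition _ := [SubChoice_isSubAlgebra of SubA by <:].

Lemma transfer_a (a b c : SubA) : a_rels (val a) (val b) (val c) -> a_rels a b c.
Proof.
move=> [h1 h2]; split; apply: val_inj; by rewrite /= ?(rmorphB, rmorphM, rmorphMn, rmorphN).
Qed.
Lemma transfer_s (a b c : SubA) : sl2_rels (val a) (val b) (val c) -> sl2_rels a b c.
Proof.
move=> [h1 h2]; split; first exact: transfer_a.
apply: val_inj; by rewrite /= ?(rmorphB, rmorphM, rmorphMn, rmorphN).
Qed.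

Lemma gen_env (rels : forall B : algType k, B -> B -> B -> Prop) (H Xm Xp : A)
  (Henv : is_enveloping rels H Xm Xp) (PH : P H) (PXm : P Xm) (PXp : P Xp)
  (transfer : forall a b c : SubA, rels A (val a) (val b) (val c) -> rels SubA a b c) x : P x.
Proof.
have mk : forall y, P y -> Pb y by move=> y Py; apply/asboolP.
pose sH := (@MkSub _ (mk _ PH)); pose sXm := (@MkSub _ (mk _ PXm)); pose sXp := (@MkSub _ (mk _ PXp)).
have [rA _] := Henv.
have [[f [hf fH fXm fXp]] _] := (Henv.2 SubA sH sXm sXp (transfer sH sXm sXp rA)).
have [_ uniq] := Henv.2 A H Xm Xp rA.
have hg : alg_hom (fun y => val (f y)).
  case: hf => fD fZ fM f1; split.
  - by move=> y z; rewrite fD rmorphD.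
  - by move=> c y; rewrite fZ linearZ.
  - by move=> y z; rewrite fM rmorphM.
  - by rewrite f1 rmorph1.
have hid : alg_hom (fun y : A => y) by [].
have := uniq _ _ hg (congr1 val fH) (congr1 val fXm) (congr1 val fXp) hid erefl erefl erefl x.
move=> <-; exact/asboolP/(valP (f x)).
Qed.

Lemma gen_a (H Xm Xp : A) : is_Ua H Xm Xp -> P H -> P Xm -> P Xp -> forall x, P x.
Proof. move=> He PH PXm PXp x; exact: (@gen_env (@a_rels k) H Xm Xp He PH PXm PXp transfer_a x). Qed.
Lemma gen_s (H Xm Xp : A) : is_Usl2 H Xm Xp -> P H -> P Xm -> P Xp -> forall x, P x.
Proof. move=> He PH PXm PXp x; exact: (@gen_env (@sl2_rels k) H Xm Xp He PH PXm PXp transfer_s x). Qed.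
End Gen.


Lemma sum_ifeq (k : fieldType) (N : nat) (F : nat -> k) (m : nat) :
  \sum_(l < N) (if (l : nat) == m then F l else 0) = if (m < N)%N then F m else 0.
Proof.
case: ltnP => Hm.
  rewrite (bigD1 (Ordinal Hm)) //= eqxx big1 ?addr0 // => l Hl.
  case: eqP => // Hlm; case/eqP: Hl; exact: val_inj.
apply: big1 => l _; case: eqP => // Hlm.
by have := ltn_ord l; rewrite Hlm ltnNge Hm.
Qed.

Lemma ifmull (k : fieldType) (b : bool) (a x : k) :
  (if b then a else 0) * x = if b then a * x else 0.
Proof. by case: b; rewrite ?mul0r. Qed.
Lemma ifmulr (k : fieldType) (b : bool) (a x : k) :
  x * (if b then a else 0) = if b then x * a else 0.
Proof. by case: b; rewrite ?mulr0. Qed.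

Lemma sumL1 (k : fieldType) (N : nat) (a F : nat -> k) (m : nat) :
  \sum_(l < N) (if (l : nat) == m then a l else 0) * F l = if (m < N)%N then a m * F m else 0.
Proof. rewrite -(@sum_ifeq _ _ (fun l => a l * F l)); apply: eq_bigr => l _; exact: ifmull. Qed.
Lemma sumL2 (k : fieldType) (N : nat) (a F : nat -> k) (m : nat) :
  \sum_(l < N) F l * (if (l : nat) == m then a l else 0) = if (m < N)%N then F m * a m else 0.
Proof. rewrite -(@sum_ifeq _ _ (fun l => F l * a l)); apply: eq_bigr => l _; exact: ifmulr. Qed.
Lemma sumL3 (k : fieldType) (N : nat) (a F : nat -> k) (m : nat) : (m <= N)%N ->
  \sum_(l < N) (if m == (l : nat).+1 then a l else 0) * F l = if m is m'.+1 then a m' * F m' else 0.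
Proof.
case: m => [|m] Hm.
  by apply: big1 => l _ /=; rewrite mul0r.
transitivity (if (m < N)%N then a m * F m else 0); last by rewrite Hm.
rewrite -(@sum_ifeq _ _ (fun l => a l * F l)); apply: eq_bigr => l _.
by rewrite ifmull eqSS eq_sym.
Qed.
Lemma sumL4 (k : fieldType) (N : nat) (a F : nat -> k) (m : nat) : (m <= N)%N ->
  \sum_(l < N) F l * (if m == (l : nat).+1 then a l else 0) = if m is m'.+1 then F m' * a m' else 0.
Proof.
case: m => [|m] Hm.
  by apply: big1 => l _ /=; rewrite mulr0.
transitivity (if (m < N)%N then F m * a m else 0); last by rewrite Hm.
rewrite -(@sum_ifeq _ _ (fun l => F l * a l)); apply: eq_bigr => l _.
by rewrite ifmulr eqSS eq_sym.
Qed.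

Section Mx.
Variables (k : fieldType) (n : nat).
Local Notation N := n.+1.

Definition hh (i : nat) : k := (n%:Z - (i%:Z *+ 2))%:~R.
Definition ee (i : nat) : k := ((i.+1)%:Z * (n%:Z - (i.+1)%:Z + 1))%:~R.
Definition mxn (G : nat -> nat -> k) : 'M[k]_N := \matrix_(i, j) G (i:nat) (j:nat).
Lemma mxn_mul G1 G2 : mxn G1 * mxn G2 = mxn (fun i j => \sum_(l < N) G1 i l * G2 l j).
Proof. by apply/matrixP => i j; rewrite -mulmxE !mxE; apply: eq_bigr => l _; rewrite !mxE. Qed.
Lemma mxn_add G1 G2 : mxn G1 + mxn G2 = mxn (fun i j => G1 i j + G2 i j).
Proof. by apply/matrixP => i j; rewrite !mxE. Qed.
Lemma mxn_opp G1 : - mxn G1 = mxn (fun i j => - G1 i j).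
Proof. by apply/matrixP => i j; rewrite !mxE. Qed.
Lemma mxn_muln G1 m : mxn G1 *+ m = mxn (fun i j => G1 i j *+ m).
Proof. by apply/matrixP => i j; rewrite mulmxnE !mxE. Qed.
Lemma mxn_eq G1 G2 : (forall i j, (i < N)%N -> (j < N)%N -> G1 i j = G2 i j) -> mxn G1 = mxn G2.
Proof. by move=> h; apply/matrixP => i j; rewrite !mxE h. Qed.

Definition Hm : 'M[k]_N := mxn (fun i j => if j == i then hh i else 0).
Definition Fm : 'M[k]_N := mxn (fun i j => if i == j.+1 then 1 else 0).
Definition Em : 'M[k]_N := mxn (fun i j => if j == i.+1 then ee i else 0).

Lemma ee_n : ee n = 0.
Proof. rewrite /ee; ring. Qed.

Lemma Hm_mull G : Hm * mxn G = mxn (fun i j => hh i * G i j).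
Proof.
rewrite /Hm mxn_mul; apply: mxn_eq => i j Hi Hj.
rewrite (@sumL1 _ _ (fun _ => hh i) (fun l => G l j)) Hi //.
Qed.
Lemma Hm_mulr G : mxn G * Hm = mxn (fun i j => G i j * hh j).
Proof.
rewrite /Hm mxn_mul; apply: mxn_eq => i j Hi Hj.
transitivity (if (j < N)%N then G i j * hh j else 0); last by rewrite Hj.
rewrite -(@sum_ifeq _ N (fun l => G i l * hh l) j).
by apply: eq_bigr => l _; rewrite ifmulr eq_sym.
Qed.
Lemma Fm_mull G : Fm * mxn G = mxn (fun i j => if i is i'.+1 then G i' j else 0).
Proof.
rewrite /Fm mxn_mul; apply: mxn_eq => i j Hi Hj.
rewrite (@sumL3 _ _ (fun _ => 1) (fun l => G l j)) ?(ltnW Hi) //.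
by case: i {Hi} => // i; rewrite mul1r.
Qed.
Lemma Fm_mulr G : mxn G * Fm = mxn (fun i j => if (j.+1 < N)%N then G i j.+1 else 0).
Proof.
rewrite /Fm mxn_mul; apply: mxn_eq => i j Hi Hj.
rewrite (@sumL2 _ _ (fun _ => 1) (fun l => G i l)).
by case: ifP; rewrite ?mulr1.
Qed.
Lemma Em_mull G : Em * mxn G = mxn (fun i j => if (i.+1 < N)%N then ee i * G i.+1 j else 0).
Proof.
rewrite /Em mxn_mul; apply: mxn_eq => i j Hi Hj.
rewrite -(@sum_ifeq _ N (fun l => ee i * G l j) i.+1).
by apply: eq_bigr => l _; rewrite ifmull eq_sym.
Qed.
Lemma Em_mulr G : mxn G * Em = mxn (fun i j => if j is j'.+1 then G i j' * ee j' else 0).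
Proof.
rewrite /Em mxn_mul; apply: mxn_eq => i j Hi Hj.
by rewrite (@sumL4 _ _ ee (fun l => G i l)) ?(ltnW Hj).
Qed.

Lemma HE : Hm * Em - Em * Hm = Em *+ 2.
Proof.
rewrite [Hm * _]Hm_mull [Em * _]Em_mull /Em mxn_opp mxn_add mxn_muln; apply: mxn_eq => i j Hi Hj.
case: eqP => [Ej|_]; last by rewrite !mulr0 if_same subr0 mul0rn.
rewrite -Ej Hj Ej /hh; ring.
Qed.

Lemma HF : Hm * Fm - Fm * Hm = - (Fm *+ 2).
Proof.
rewrite [Hm * _]Hm_mull [Fm * _]Fm_mull /Fm mxn_opp mxn_add mxn_muln mxn_opp; apply: mxn_eq => i j Hi Hj.
rewrite /Hm /=.
case: i Hi => [|i] Hi /=; first by rewrite mulr0 subr0 mul0rn oppr0.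
rewrite ?eqSS eq_sym; case: eqP => _; last by rewrite mulr0 subr0 mul0rn oppr0.
rewrite /hh; ring.
Qed.

Lemma EF : Em * Fm - Fm * Em = Hm.
Proof.
rewrite [Em * _]Em_mull [Fm * _]Fm_mull /Fm mxn_opp mxn_add /Hm; apply: mxn_eq => i j Hi Hj.
rewrite /Em /=.
have E : (if (i.+1 < N)%N then ee i * (if i.+1 == j.+1 then 1 else 0) else 0) = ee i * (if j == i then 1 else 0).
  case: ltnP => H; first by rewrite eqSS eq_sym.
  have -> : i = n by apply/eqP; rewrite eqn_leq -ltnS Hi.
  by rewrite ee_n mul0r.
rewrite E; case: eqP => [->|Hne].
  case: i {Hi E} => [|i] /=; rewrite ?eqxx ?mulr1 ?subr0 /ee /hh; ring.
rewrite mulr0; case: i {Hi E} Hne => [|i] Hne /=; first by rewrite subr0.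
by case: eqP => // _; rewrite subrr.
Qed.

Lemma one_mxn : (1 : 'M[k]_N) = mxn (fun i j => if j == i then 1 else 0).
Proof.
apply/matrixP => i j; rewrite !mxE; case: (i =P j) => [->|ne]; first by rewrite !eqxx.
case: eqP => // h; case: ne; exact/val_inj.
Qed.

Lemma Hm_powl b G : Hm ^+ b * mxn G = mxn (fun i j => hh i ^+ b * G i j).
Proof.
elim: b => [|b IH].
  by rewrite expr0 mul1r; apply: mxn_eq => i j _ _; rewrite mul1r.
rewrite exprS -mulrA IH Hm_mull; apply: mxn_eq => i j _ _; by rewrite exprS mulrA.
Qed.

Lemma Fm_powl a G : Fm ^+ a * mxn G = mxn (fun i j => if (a <= i)%N then G (i - a)%N j else 0).
Proof.
elim: a => [|a IH].
  by rewrite expr0 mul1r; apply: mxn_eq => i j _ _; rewrite subn0.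
rewrite exprS -mulrA IH Fm_mull; apply: mxn_eq => i j _ _.
by case: i.
Qed.

Fixpoint PP (i c : nat) : k := if c is c'.+1 then ee i * PP i.+1 c' else 1.

Lemma Em_powl c G : Em ^+ c * mxn G =
  mxn (fun i j => if (i + c < N)%N then PP i c * G (i + c)%N j else 0).
Proof.
elim: c G => [|c IH] G.
  by rewrite expr0 mul1r; apply: mxn_eq => i j Hi _; rewrite addn0 Hi mul1r.
rewrite exprS -mulrA IH Em_mull; apply: mxn_eq => i j _ _ /=.
rewrite addnS -addSn; case: (ltnP (i.+1 + c) N) => H1.
  by rewrite (leq_ltn_trans (leq_addr c i.+1) H1) mulrA.
by case: ifP => //; rewrite mulr0.
Qed.
End Mx.


Lemma sum_ifeqV (V : zmodType) (N : nat) (F : nat -> V) (m : nat) :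
  \sum_(l < N) (if (l : nat) == m then F l else 0) = if (m < N)%N then F m else 0.
Proof.
case: ltnP => Hm.
  rewrite (bigD1 (Ordinal Hm)) //= eqxx big1 ?addr0 // => l Hl.
  case: eqP => // Hlm; case/eqP: Hl; exact: val_inj.
apply: big1 => l _; case: eqP => // Hlm.
by have := ltn_ord l; rewrite Hlm ltnNge Hm.
Qed.

Lemma sum_ifc (V : zmodType) (N : nat) (b : bool) (F : 'I_N -> V) :
  \sum_(l < N) (if b then F l else 0) = if b then \sum_(l < N) F l else 0.
Proof. by case: b; rewrite ?big1_eq. Qed.

Lemma sum_widen (V : zmodType) (N N' : nat) (F : nat -> V) : (N <= N')%N ->
  \sum_(l < N') (if (l < N)%N then F l else 0) = \sum_(l < N) F l.
Proof. by move=> H; rewrite (big_ord_widen _ F H) [RHS]big_mkcond. Qed.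

Lemma sum_ifeqN (V : zmodType) (N : nat) (F : nat -> V) (m : nat) :
  \sum_(0 <= l < N) (if l == m then F l else 0) = if (m < N)%N then F m else 0.
Proof. by rewrite big_mkord (@sum_ifeqV _ _ (fun l => F l)). Qed.

Lemma sum_ifcN (V : zmodType) (N : nat) (b : bool) (F : nat -> V) :
  \sum_(0 <= l < N) (if b then F l else 0) = if b then \sum_(0 <= l < N) F l else 0.
Proof. by case: b; rewrite ?big1_eq. Qed.

Lemma sum_widenN (V : zmodType) (N N' : nat) (F : nat -> V) : (N <= N')%N ->
  \sum_(0 <= l < N') (if (l < N)%N then F l else 0) = \sum_(0 <= l < N) F l.
Proof. by move=> H; rewrite (big_nat_widen _ _ _ _ _ H) [RHS]big_mkcond. Qed.

Section PBW.
Variables (k : fieldType) (A : algType k) (Hs Fs Es : A).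
Hypothesis Hrel : sl2_rels Hs Fs Es.
Hypothesis gen : forall P : A -> Prop,
  P 1 -> (forall x y, P x -> P y -> P (x + y)) ->
  (forall (c : k) x, P x -> P (c *: x)) -> (forall x y, P x -> P y -> P (x * y)) ->
  P Hs -> P Fs -> P Es -> forall x, P x.

Definition mon (a b c : nat) : A := Fs ^+ a * Hs ^+ b * Es ^+ c.
Definition TT (M : nat) (g : nat -> nat -> nat -> k) : A :=
  \sum_(0 <= a < M) \sum_(0 <= b < M) \sum_(0 <= c < M) g a b c *: mon a b c.
Definition SS (y : A) : Prop := exists M g, y = TT M g.

Definition gw (M : nat) (g : nat -> nat -> nat -> k) a b c :=
  if (a < M)%N then if (b < M)%N then if (c < M)%N then g a b c else 0 else 0 else 0.

Lemma TT_widen M M' g : (M <= M')%N -> TT M g = TT M' (gw M g).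
Proof.
move=> HM; rewrite /TT /gw.
under [RHS]eq_bigr => a _.
  under eq_bigr => b _.
    under eq_bigr => c _ do rewrite (fun_if (fun t => t *: mon a b c)) scale0r
      (fun_if (fun t => t *: mon a b c)) scale0r (fun_if (fun t => t *: mon a b c)) scale0r.
    rewrite sum_ifcN sum_ifcN.
    over.
  rewrite sum_ifcN.
  over.
rewrite sum_widenN //; apply: eq_bigr => a _.
rewrite sum_widenN //; apply: eq_bigr => b _.
by rewrite sum_widenN.
Qed.

Lemma SS0 : SS 0.
Proof. by exists 0%N, (fun _ _ _ => 0); rewrite /TT big_geq. Qed.

Lemma SSD x y : SS x -> SS y -> SS (x + y).
Proof.
move=> [M1 [g1 ->]] [M2 [g2 ->]].
exists (maxn M1 M2), (fun a b c => gw M1 g1 a b c + gw M2 g2 a b c).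
rewrite (TT_widen _ _ g1 (leq_maxl M1 M2)) (TT_widen _ _ g2 (leq_maxr M1 M2)) /TT.
rewrite -big_split; apply: eq_bigr => a _.
rewrite -big_split; apply: eq_bigr => b _.
rewrite -big_split; apply: eq_bigr => c _.
by rewrite scalerDl.
Qed.

Lemma SSZ (c : k) x : SS x -> SS (c *: x).
Proof.
move=> [M [g ->]]; exists M, (fun a b d => c * g a b d); rewrite /TT.
rewrite scaler_sumr; apply: eq_bigr => a _.
rewrite scaler_sumr; apply: eq_bigr => b _.
rewrite scaler_sumr; apply: eq_bigr => d _.
by rewrite scalerA.
Qed.

Lemma SSmon a b c : SS (mon a b c).
Proof.
exists (a + b + c).+1, (fun a' b' c' => if a' == a then if b' == b then if c' == c then 1 else 0 else 0 else 0).
rewrite /TT.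
under eq_bigr => a' _.
  under eq_bigr => b' _.
    under eq_bigr => c' _ do rewrite (fun_if (fun t => t *: mon a' b' c')) scale0r
      (fun_if (fun t => t *: mon a' b' c')) scale0r (fun_if (fun t => t *: mon a' b' c')) scale0r scale1r.
    rewrite sum_ifcN sum_ifcN sum_ifeqN.
    over.
  rewrite sum_ifcN sum_ifeqN.
  over.
rewrite sum_ifeqN.
have Ha : (a < (a + b + c).+1)%N by lia.
have Hb : (b < (a + b + c).+1)%N by lia.
have Hc : (c < (a + b + c).+1)%N by lia.
by rewrite Ha Hb Hc.
Qed.

Lemma SS_lmul x z : (forall a b c, SS (x * mon a b c)) -> SS z -> SS (x * z).
Proof.
move=> Hm [M [g ->]]; rewrite /TT mulr_sumr.
apply: big_ind => //; [exact: SS0 | exact: SSD | move=> a _].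
rewrite mulr_sumr; apply: big_ind => //; [exact: SS0 | exact: SSD | move=> b _].
rewrite mulr_sumr; apply: big_ind => //; [exact: SS0 | exact: SSD | move=> c _].
have -> : x * (g a b c *: mon a b c) = g a b c *: (x * mon a b c) by rewrite -scalerAr.
apply: SSZ; exact: Hm.
Qed.

Lemma SSB x y : SS x -> SS y -> SS (x - y).
Proof. by move=> Hx Hy; rewrite -scaleN1r; apply: SSD => //; apply: SSZ. Qed.
Lemma SSn x m : SS x -> SS (x *+ m).
Proof. by move=> Hx; rewrite -scaler_nat; apply: SSZ. Qed.

Lemma LF z : SS z -> SS (Fs * z).
Proof.
apply: SS_lmul => a b c; rewrite /mon !mulrA -exprS; exact: SSmon.
Qed.

Lemma HFc : Hs * Fs = Fs * Hs - Fs *+ 2.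
Proof. case: Hrel => [[_ h] _]; by rewrite -h addrC subrK. Qed.
Lemma HEc : Es * Hs = Hs * Es - Es *+ 2.
Proof. case: Hrel => [[h _] _]; by rewrite -h opprB addrC subrK. Qed.
Lemma EFc : Es * Fs = Fs * Es + Hs.
Proof. case: Hrel => [_ h]; by rewrite -h addrC subrK. Qed.

Lemma LH_mon a b c : SS (Hs * mon a b c).
Proof.
elim: a b c => [|a IH] b c.
  rewrite /mon expr0 !mul1r mulrA -exprS; have := SSmon 0 b.+1 c; by rewrite /mon !expr0 !mul1r.
have -> : Hs * mon a.+1 b c = Fs * (Hs * mon a b c) - (Fs * mon a b c) *+ 2.
  by rewrite /mon exprS -!mulrA [Hs * (Fs * _)]mulrA HFc mulrBl mulrnAl -!mulrA.
apply: SSB; first exact: LF.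
by apply: SSn; apply: LF; exact: SSmon.
Qed.

Lemma LH z : SS z -> SS (Hs * z).
Proof. apply: SS_lmul; exact: LH_mon. Qed.

Lemma LE_HE b c : SS (Es * (Hs ^+ b * Es ^+ c)).
Proof.
elim: b c => [|b IH] c.
  rewrite expr0 mul1r -exprS; have := SSmon 0 0 c.+1; by rewrite /mon !expr0 !mul1r.
have -> : Es * (Hs ^+ b.+1 * Es ^+ c) = Hs * (Es * (Hs ^+ b * Es ^+ c)) - (Es * (Hs ^+ b * Es ^+ c)) *+ 2.
  by rewrite exprS -!mulrA [Es * (Hs * _)]mulrA HEc mulrBl mulrnAl -!mulrA.
apply: SSB; first exact: LH.
exact: SSn.
Qed.

Lemma LE_mon a b c : SS (Es * mon a b c).
Proof.
elim: a b c => [|a IH] b c.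
  rewrite /mon expr0 mul1r; exact: LE_HE.
have -> : Es * mon a.+1 b c = Fs * (Es * mon a b c) + Hs * mon a b c.
  by rewrite /mon exprS -!mulrA [Es * (Fs * _)]mulrA EFc mulrDl -!mulrA.
apply: SSD; [exact: LF | exact: LH_mon].
Qed.

Lemma LE z : SS z -> SS (Es * z).
Proof. apply: SS_lmul; exact: LE_mon. Qed.

Lemma spanning y : SS y.
Proof.
have : forall x z, SS z -> SS (x * z).
  apply: (gen (fun x => forall z, SS z -> SS (x * z))).
  - by move=> z; rewrite mul1r.
  - by move=> x1 x2 h1 h2 z hz; rewrite mulrDl; apply: SSD; [apply: h1 | apply: h2].
  - by move=> c x1 h1 z hz; rewrite -scalerAl; apply: SSZ; apply: h1.
  - by move=> x1 x2 h1 h2 z hz; rewrite -mulrA; apply: h1; apply: h2.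
  - exact: LH.
  - exact: LF.
  - exact: LE.
move=> /(_ y 1); rewrite mulr1; apply.
have := SSmon 0 0 0; by rewrite /mon !expr0 !mulr1.
Qed.
End PBW.

Set Implicit Arguments. Unset Strict Implicit.

Lemma natr_inj0 (k : fieldType) (char0 : [pchar k] =i pred0) (m n : nat) :
  (m%:R : k) = n%:R -> m = n.
Proof.
move=> h; wlog le : m n h / (m <= n)%N.
  by move=> W; case: (leqP m n) => H; [exact: W | apply/esym/W => //; exact: ltnW].
have : ((n - m)%N%:R : k) = 0 by rewrite natrB // h subrr.
move/eqP; rewrite (pcharf0P _).1 // subn_eq0 => H; lia.
Qed.

Lemma poly_zero_inf (k : fieldType) (char0 : [pchar k] =i pred0) (p : {poly k}) (n0 : nat) :
  (forall n, (n0 <= n)%N -> p.[n%:R] = 0) -> p = 0.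
Proof.
move=> h; apply/eqP; apply: contraT => pn0.
have := max_poly_roots pn0 (rs := [seq (n0 + i)%N%:R | i <- iota 0 (size p)]).
rewrite size_map size_iota ltnn; apply.
  apply/allP => x /mapP [i _ ->]; apply/rootP; apply: h; exact: leq_addr.
rewrite map_inj_uniq ?iota_uniq // => i j /(@natr_inj0 _ char0 _ _) /eqP; rewrite eqn_add2l => /eqP.
by [].
Qed.

Lemma ee_nat (k : fieldType) (n i : nat) : (i < n)%N -> ee k n i = ((i.+1 * (n - i))%N)%:R.
Proof.
move=> Hi; have [d ->] : exists d, n = (i.+1 + d)%N by exists (n - i.+1)%N; lia.
rewrite (_ : (i.+1 + d - i)%N = d.+1); last by lia.
rewrite /ee; ring.
Qed.

Lemma ee_neq0 (k : fieldType) (char0 : [pchar k] =i pred0) (n i : nat) : (i < n)%N -> ee k n i != 0.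
Proof.
move=> Hi; rewrite ee_nat // (pcharf0P _).1 //; rewrite muln_eq0 negb_or /=; lia.
Qed.

Lemma PP_neq0 (k : fieldType) (char0 : [pchar k] =i pred0) (n c : nat) :
  forall i, (i + c <= n)%N -> PP k n i c != 0.
Proof.
elim: c => [|c IH] i Hic /=; first exact: oner_neq0.
rewrite mulf_neq0 //; first by apply: ee_neq0 => //; lia.
apply: IH; lia.
Qed.

Lemma monE (k : fieldType) (n a b c : nat) :
  Fm k n ^+ a * Hm k n ^+ b * Em k n ^+ c =
  mxn k n (fun i j => if (a <= i)%N then hh k n (i - a) ^+ b *
     (if (i - a + c < n.+1)%N then PP k n (i - a) c * (if j == (i - a + c)%N then 1 else 0) else 0)
     else 0).
Proof. by rewrite -mulrA -[Em k n ^+ c]mulr1 one_mxn Em_powl Hm_powl Fm_powl. Qed.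

Lemma scale_mxE (k : fieldType) (N : nat) (c : k) (B : 'M[k]_N) i j : (c *: B) i j = c * B i j.
Proof. by rewrite mxE. Qed.

Lemma ent_collapse (k : fieldType) (n M : nat) (g : nat -> nat -> nat -> k) (a0 c0 : nat)
  (IH : forall c, (c < c0)%N -> forall a b, (a < M)%N -> (b < M)%N -> g a b c = 0)
  (Hc0 : (c0 < n.+1)%N) (a b c : nat) (Ha : (a < M)%N) (Hb : (b < M)%N) :
  g a b c * (if (a <= a0)%N then hh k n (a0 - a) ^+ b *
     (if (a0 - a + c < n.+1)%N then PP k n (a0 - a) c * (if c0 == (a0 - a + c)%N then 1 else 0) else 0)
     else 0)
  = if a == a0 then (if c == c0 then g a0 b c0 * (hh k n 0 ^+ b * PP k n 0 c0) else 0) else 0.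
Proof.
case: (ltnP c c0) => Hcc.
  by rewrite IH // mul0r (ltn_eqF Hcc) if_same.
case: (a =P a0) => [->|Hne].
  rewrite leqnn subnn add0n; case: (c =P c0) => [->|Hne2].
    by rewrite Hc0 eqxx mulr1.
  have -> : (c0 == c) = false by apply/eqP => E; apply: Hne2.
  by rewrite mulr0 if_same mulr0 mulr0.
case: (leqP a a0) => Haa; last by rewrite mulr0.
case: eqP => E; first by exfalso; apply: Hne; lia.
by rewrite mulr0 if_same mulr0 mulr0.
Qed.

Lemma sum_collapse (k : fieldType) (M a0 c0 : nat) (T : nat -> k) :
  (a0 < M)%N -> (c0 < M)%N ->
  \sum_(0 <= a < M) \sum_(0 <= b < M) \sum_(0 <= c < M)
     (if a == a0 then (if c == c0 then T b else 0) else 0)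
  = \sum_(0 <= b < M) T b.
Proof.
move=> Ha Hc.
under eq_bigr => a _.
  under eq_bigr => b _ do rewrite sum_ifcN sum_ifeqN Hc.
  rewrite sum_ifcN.
  over.
by rewrite sum_ifeqN Ha.
Qed.

Section AlgHom.
Variables (k : fieldType) (A B : algType k) (f : A -> B) (hf : alg_hom f).
Lemma ah0 : f 0 = 0.
Proof. case: hf => fD _ _ _; have h := fD 0 0; rewrite addr0 in h; apply: (addrI (f 0)); by rewrite -h addr0. Qed.
Lemma ahsum I r (P : pred I) (F : I -> A) : f (\sum_(i <- r | P i) F i) = \sum_(i <- r | P i) f (F i).
Proof. case: hf => fD _ _ _; exact: (big_morph f fD ah0). Qed.
Lemma ahexp x m : f (x ^+ m) = f x ^+ m.
Proof. case: hf => _ _ fM f1; elim: m => [|m IH]; first by rewrite !expr0. by rewrite !exprS fM IH. Qed.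
Lemma ahZ c x : f (c *: x) = c *: f x. Proof. by case: hf. Qed.
Lemma ahM x y : f (x * y) = f x * f y. Proof. by case: hf. Qed.
Lemma ahD x y : f (x + y) = f x + f y. Proof. by case: hf. Qed.
Lemma ah1 : f 1 = 1. Proof. by case: hf. Qed.
End AlgHom.

Section Faith.
Variables (k : fieldType) (char0 : [pchar k] =i pred0) (A : algType k) (Hs Fs Es : A).
Hypothesis Hrel : sl2_rels Hs Fs Es.
Hypothesis gen : forall P : A -> Prop,
  P 1 -> (forall x y, P x -> P y -> P (x + y)) ->
  (forall (c : k) x, P x -> P (c *: x)) -> (forall x y, P x -> P y -> P (x * y)) ->
  P Hs -> P Fs -> P Es -> forall x, P x.
Hypothesis exPhi : forall n : nat, exists Phi : A -> 'M[k]_n.+1,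
  [/\ alg_hom Phi, Phi Hs = Hm k n, Phi Fs = Fm k n & Phi Es = Em k n].

Lemma phiTT n (Phi : A -> 'M[k]_n.+1) : alg_hom Phi -> Phi Hs = Hm k n ->
  Phi Fs = Fm k n -> Phi Es = Em k n -> forall M g,
  Phi (TT k A Hs Fs Es M g) = \sum_(0 <= a < M) \sum_(0 <= b < M) \sum_(0 <= c < M)
     g a b c *: (Fm k n ^+ a * Hm k n ^+ b * Em k n ^+ c).
Proof.
move=> hP PH PF PE M g.
rewrite /TT (ahsum hP); apply: eq_bigr => a _; rewrite (ahsum hP); apply: eq_bigr => b _.
rewrite (ahsum hP); apply: eq_bigr => c _.
by rewrite (ahZ hP) /mon !(ahM hP) !(ahexp hP) PH PF PE.
Qed.

Lemma entry_sum3 n M (F : nat -> nat -> nat -> 'M[k]_n.+1) i j :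
  (\sum_(0 <= a < M) \sum_(0 <= b < M) \sum_(0 <= c < M) F a b c) i j =
  \sum_(0 <= a < M) \sum_(0 <= b < M) \sum_(0 <= c < M) F a b c i j.
Proof.
rewrite summxE; apply: eq_bigr => a _; rewrite summxE; apply: eq_bigr => b _.
by rewrite summxE.
Qed.

Lemma faithful y :
  (forall (n : nat) (Phi : A -> 'M[k]_n.+1), alg_hom Phi -> Phi Hs = Hm k n ->
     Phi Fs = Fm k n -> Phi Es = Em k n -> Phi y = 0) -> y = 0.
Proof.
move=> hy; have [M [g Ey]] := @spanning _ _ _ _ _ Hrel gen y; rewrite Ey in hy *.
suff gz : forall c, (c < M)%N -> forall a b, (a < M)%N -> (b < M)%N -> g a b c = 0.
  rewrite /TT big_nat big1 // => a /= Ha; rewrite big_nat big1 // => b /= Hb.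
  by rewrite big_nat big1 // => c /= Hc; rewrite gz // scale0r.
elim/ltn_ind => c0 IH Hc0 a0 b0 Ha0 Hb0.
pose p := \poly_(b < M) g a0 b c0.
suff pz : p = 0 by have := coef_poly M (fun b => g a0 b c0) b0; rewrite -/p pz coef0 Hb0 => <-.
apply: (@poly_zero_inf _ char0 _ (M + M)%N) => n Hn.
have [Phi [hP PH PF PE]] := exPhi n.
have := hy n Phi hP PH PF PE.
rewrite (phiTT hP PH PF PE).
move/matrixP/(_ (inord a0) (inord c0)); rewrite entry_sum3 mxE.
have Hc0n : (c0 < n.+1)%N by lia.
have E : forall a b c, (a < M)%N -> (b < M)%N ->
  (g a b c *: (Fm k n ^+ a * Hm k n ^+ b * Em k n ^+ c)) (inord a0) (inord c0) =
  (if a == a0 then (if c == c0 then g a0 b c0 * (hh k n 0 ^+ b * PP k n 0 c0) else 0) else 0).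
  move=> a b c Ha Hb; rewrite scale_mxE monE mxE !inordK; last 2 first.
  - lia.
  - lia.
  apply: (@ent_collapse k n M g a0 c0 _ Hc0n a b c Ha Hb) => c1 Hc1 a1 b1 Ha1 Hb1; apply: IH => //; lia.
under eq_big_nat => a /andP [_ Ha].
  under eq_big_nat => b /andP [_ Hb].
    under eq_big_nat => c _ do rewrite E //.
    over.
  over.
rewrite sum_collapse // => h.
have hh0 : hh k n 0 = n%:R by rewrite /hh; ring.
have PPn : PP k n 0 c0 != 0 by apply: PP_neq0 => //; lia.
have h2 : (\sum_(0 <= b < M) g a0 b c0 * n%:R ^+ b) * PP k n 0 c0 = 0.
  by rewrite mulr_suml -[RHS]h; apply: eq_bigr => b _; rewrite hh0 mulrA.
move/eqP: h2; rewrite mulf_eq0 (negbTE PPn) orbF => /eqP <-.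
by rewrite horner_poly big_mkord.
Qed.
End Faith.

Unset Implicit Arguments.


Definition ev (k : fieldType) (l : nat) : Vamb k := fun j i => if (j == 0%N) && (i == l) then 1 else 0.

Section Main.
Variables (k : fieldType) (Ua : algType k) (H Xm Xp : Ua) (HUa : is_Ua H Xm Xp)
  (Us : algType k) (Hs Fs Es : Us) (pi : Ua -> Us)
  (hpi : alg_hom pi) (piH : pi H = Hs) (piXm : pi Xm = Fs) (piXp : pi Xp = Es)
  (psi : nat -> int -> pseries k) (Hpsi : colouring psi)
  (rho : int -> Ua -> Vamb k -> Vamb k)
  (Hrho : forall n : int, is_Vh_action H Xm Xp psi n (rho n)).

Lemma Qlemma (n : nat) (Phi : Us -> 'M[k]_n.+1) : alg_hom Phi -> Phi Hs = Hm k n ->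
  Phi Fs = Fm k n -> Phi Es = Em k n ->
  forall x v (i : 'I_n.+1), rho n%:Z x v 0%N i = \sum_(l < n.+1) Phi (pi x) i l * v 0%N l.
Proof.
move=> hP PH PF PE.
have [rD rZ rM r1 [rH rXm rXp]] := Hrho n%:Z.
have [C1 C2 _] := Hpsi.
apply: (@gen_a k Ua (fun x => forall v (i : 'I_n.+1), rho n%:Z x v 0%N i =
   \sum_(l < n.+1) Phi (pi x) i l * v 0%N l) _ _ _ _ H Xm Xp HUa).
- move=> v i; rewrite r1 (ah1 hpi) (ah1 hP) one_mxn.
  under eq_bigr do rewrite mxE.
  by rewrite (@sumL1 _ _ (fun _ => 1) (fun l => v 0%N l)) ltn_ord mul1r.
- move=> x y hx hy v i; rewrite rD hx hy (ahD hpi) (ahD hP) -big_split.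
  by apply: eq_bigr => l _; rewrite mxE mulrDl.
- move=> c x hx v i; rewrite rZ hx (ahZ hpi) (ahZ hP) mulr_sumr.
  by apply: eq_bigr => l _; rewrite scale_mxE mulrA.
- move=> x y hx hy v i; rewrite rM hx (ahM hpi) (ahM hP).
  under eq_bigr do rewrite hy mulr_sumr.
  rewrite exchange_big; apply: eq_bigr => m _.
  by rewrite -mulmxE mxE mulr_suml; apply: eq_bigr => l _; rewrite mulrA.
- move=> v i; rewrite rH piH PH /Hm.
  under eq_bigr do rewrite mxE.
  by rewrite (@sumL1 _ _ (fun _ => hh k n i) (fun l => v 0%N l)) ltn_ord.
- move=> v i; rewrite rXm piXm PF /Fm.
  under eq_bigr do rewrite mxE.
  rewrite (@sumL3 _ _ (fun _ => 1) (fun l => v 0%N l)) ?(ltnW (ltn_ord i)) //.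
  by case: (nat_of_ord i) => // i'; rewrite mul1r.
- move=> v i; rewrite rXp piXp PE /Em.
  under eq_bigr do rewrite mxE.
  rewrite (@sumL1 _ _ (fun _ => ee k n i) (fun l => v 0%N l)).
  rewrite /actXp big_ord1 subn0 /=.
  case: ltnP => Hi.
    by rewrite C1.
  have -> : (i : nat) = n by have := ltn_ord i; lia.
  by rewrite C2 mul0r.
Qed.

Lemma sum_ev N (A : 'M[k]_N) (i l : 'I_N) : \sum_(l' < N) A i l' * ev k l 0%N l' = A i l.
Proof.
rewrite (bigD1 l) //= /ev !eqxx /= mulr1 big1 ?addr0 // => l' hl'.
case: eqP => [E|_]; last by rewrite mulr0.
by case/eqP: hl'; apply: val_inj.
Qed.

Lemma ev_in (l : nat) : in_Vh (ev k l).
Proof.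
move=> j; exists l.+1 => i Hi; rewrite /ev.
rewrite (_ : (i == l) = false) ?andbF //; apply/eqP => E.
by move: Hi; rewrite E ltnn.
Qed.

Variables (char0 : [pchar k] =i pred0) (HUs : is_Usl2 Hs Fs Es).

Lemma keyQ u : (forall (n : nat) (v : Vamb k), in_Vh v -> forall i, rho n%:Z u v 0%N i = 0) ->
  pi u = 0.
Proof.
move=> hu.
have Hrel := HUs.1.
have genS := fun P P1 PD PZ PM => @gen_s k Us P P1 PD PZ PM Hs Fs Es HUs.
have exPhi : forall n : nat, exists Phi : Us -> 'M[k]_n.+1,
  [/\ alg_hom Phi, Phi Hs = Hm k n, Phi Fs = Fm k n & Phi Es = Em k n].
  move=> n.
  have [[f [hf fH fF fE]] _] := HUs.2 _ (Hm k n) (Fm k n) (Em k n)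
     (conj (conj (HE k n) (HF k n)) (EF k n)).
  by exists f.
apply: (faithful char0 Hrel genS exPhi) => n Phi hP PH PF PE.
apply/matrixP => i l; rewrite mxE.
have := @Qlemma n Phi hP PH PF PE u (ev k l) i.
by rewrite hu ?sum_ev //; exact: ev_in.
Qed.
End Main.

Theorem mainTheorem4
  (k : fieldType) (char0 : [pchar k] =i pred0)
  (Ua : algType k) (H Xm Xp : Ua) (HUa : is_Ua H Xm Xp)
  (Us : algType k) (Hs Fs Es : Us) (HUs : is_Usl2 Hs Fs Es)
  (pi : Ua -> Us)
  (Hpi : [/\ alg_hom pi, pi H = Hs, pi Xm = Fs & pi Xp = Es])
  (psi : nat -> int -> pseries k) (Hpsi : colouring psi)
  (rho : int -> Ua -> Vamb k -> Vamb k)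
  (Hrho : forall n : int, is_Vh_action H Xm Xp psi n (rho n)) :
  exists f : Uh Ua -> Us,
    [/\ quot_a_hom rho pi f,
        (forall g : Uh Ua -> Us, quot_a_hom rho pi g -> forall X, g X = f X) &
        (forall y : Us, exists X : Uh Ua, f X = y)].
Proof.
case: Hpi => hpi piH piXm piXp.
pose f := fun X : Uh Ua => pi (X 0%N).
have rho0 : forall n v j i, rho n 0 v j i = 0.
  move=> n v j i; have [rD _ _ _ _] := Hrho n.
  have h := rD 0 0 v j i; rewrite addr0 in h.
  by apply: (addrI (rho n 0 v j i)); rewrite -h addr0.
have hJ : forall X, in_J rho X -> pi (X 0%N) = 0.
  move=> X [Y [Z [hY hX]]]; rewrite hX /= addr0.
  apply: (@keyQ _ _ _ _ _ HUa _ _ _ _ _ hpi piH piXm piXp _ Hpsi _ Hrho char0 HUs).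
  move=> n v hv i; have := hY n%:Z v hv 0%N i.
  by rewrite /uh_act big_ord1 subn0.
have surj : forall y : Us, exists x, pi x = y.
  apply: (@gen_s k Us (fun y => exists x, pi x = y) _ _ _ _ Hs Fs Es HUs).
  - by exists 1; exact: (ah1 hpi).
  - by move=> y1 y2 [x1 <-] [x2 <-]; exists (x1 + x2); exact: (ahD hpi).
  - by move=> c y1 [x1 <-]; exists (c *: x1); exact: (ahZ hpi).
  - by move=> y1 y2 [x1 <-] [x2 <-]; exists (x1 * x2); exact: (ahM hpi).
  - by exists H.
  - by exists Xm.
  - by exists Xp.
exists f; split.
- split.
  + split.
    * by move=> X Y; exact: (ahD hpi).
    * by move=> c X; exact: (ahZ hpi).
    * by move=> X Y; rewrite /f /uh_mul /ps_mul big_ord1 subn0; exact: (ahM hpi).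
    * exact: (ah1 hpi).
  + exact: hJ.
  + by [].
- move=> g [[gD gZ gM g1] gJ gc] X.
  have EX : X = uh_add (uh_const (X 0%N)) (uh_h (fun m => X m.+1)).
    apply: funext => m; rewrite /uh_add /uh_const /uh_h.
    by case: m => [|m]; rewrite ?addr0 ?add0r.
  rewrite {1}EX gD gc.
  have -> : g (uh_h (fun m => X m.+1)) = 0.
    apply: gJ; exists (fun _ => 0), (fun m => X m.+1); split; last by move=> m; rewrite add0r.
    move=> n v hv j i; rewrite /uh_act; apply: big1 => m _; exact: rho0.
  by rewrite addr0.
- move=> y; have [x <-] := surj y; by exists (uh_const x).
Qed.
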